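(* Let $\Gamma$ and $\Delta$ be finite subsets of ${\sf Frm}$. If the sequent $\Gamma\Rightarrow\Delta$ is derivable in ${\sf GWF_{N_2}}$, then $\vdash_{\sf WF_{N_2}}\bigwedge\Gamma\rightarrow\bigvee\Delta$.
   Context: Language: countably many atoms $p,q,\dots$, the constant $\bot$, and binary connectives $\wedge,\vee,\rightarrow$ ($\rightarrow$ is strict implication). ${\sf Frm}$ is the set of formulas built from atoms and $\bot$ with $\wedge,\vee,\rightarrow$; $A,B,C,D$ range over ${\sf Frm}$. Let $\supset$ be a new binary symbol (material implication) and ${\sf Frm_1}={\sf Frm}\cup\{A\supset B : A,B\in{\sf Frm}\}$ (no nesting of $\supset$). ${\sf Frm_2}$ is the smallest set containing ${\sf Frm_1}$ and closed under $\wedge$ and $\vee$; $X,Y$ range over ${\sf Frm_2}$. A sequent is $\Gamma\Rightarrow\Delta$ with $\Gamma,\Delta$ finite multisets of ${\sf Frm_2}$-formulas. The calculus ${\sf GWF_{N_2}}$ has initial sequents $(id)$ $p,\Gamma\Rightarrow\Delta,p$ ($p$ an atom) and $(L_\bot)$ $\bot,\Gamma\Rightarrow\Delta$, and rules (premises / conclusion): $(L_\wedge)$ $X,Y,\Gamma\Rightarrow\Delta$ / $X\wedge Y,\Gamma\Rightarrow\Delta$; $(R_\wedge)$ $\Gamma\Rightarrow\Delta,X$ and $\Gamma\Rightarrow\Delta,Y$ / $\Gamma\Rightarrow\Delta,X\wedge Y$; $(L_\vee)$ $X,\Gamma\Rightarrow\Delta$ and $Y,\Gamma\Rightarrow\Delta$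 / $X\vee Y,\Gamma\Rightarrow\Delta$; $(R_\vee)$ $\Gamma\Rightarrow\Delta,X,Y$ / $\Gamma\Rightarrow\Delta,X\vee Y$; $(L_\supset)$ $\Gamma\Rightarrow\Delta,A$ and $B,\Gamma\Rightarrow\Delta$ / $A\supset B,\Gamma\Rightarrow\Delta$; $(R_\supset)$ $A,\Gamma\Rightarrow\Delta,B$ / $\Gamma\Rightarrow\Delta,A\supset B$; $(LR_\rightarrow)$ $C\supset D,A\Rightarrow B$ / $\Gamma,C\rightarrow D\Rightarrow\Delta,A\rightarrow B$; $(R_\rightarrow)$ $A\Rightarrow B$ / $\Gamma\Rightarrow\Delta,A\rightarrow B$. Here $A,B,C,D\in{\sf Frm}$, $X,Y\in{\sf Frm_2}$, and $\Gamma,\Delta$ are arbitrary finite multisets of ${\sf Frm_2}$-formulas. The Hilbert system ${\sf WF_{N_2}}$ over ${\sf Frm}$ has axiom schemes $A\rightarrow(A\vee B)$; $B\rightarrow(A\vee B)$; $(A\wedge B)\rightarrow A$; $(A\wedge B)\rightarrow B$; $A\wedge(B\vee C)\rightarrow(A\wedge B)\vee(A\wedge C)$; $A\rightarrow A$; $\bot\rightarrow A$; and rules (from theorems to a theorem): from $A$ and $A\rightarrow B$ infer $B$; from $A$ infer $B\rightarrow A$; from $A\rightarrow B$ and $B\rightarrow C$ infer $A\rightarrow C$; from $A\rightarrow B$ and $A\rightarrow C$ infer $A\rightarrow(B\wedge C)$; from $A\rightarrow C$ and $B\rightarrow C$ infer $(A\vee B)\rightarrow C$; from $A$ and $B$ infer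 $A\wedge B$; (${\sf N_2}$) from $C\rightarrow A\vee D$ and $C\wedge B\rightarrow D$ infer $(A\rightarrow B)\rightarrow(C\rightarrow D)$. $\vdash_{\sf WF_{N_2}}A$ means $A$ is a theorem of this system. $\bigwedge\Gamma$ and $\bigvee\Delta$ denote the conjunction and disjunction of the members of $\Gamma$, resp. $\Delta$ (with the empty conjunction read as $\top:=\bot\rightarrow\bot$ and the empty disjunction as $\bot$). *)

(* Defs.v *)
From Stdlib Require Import List Permutation.
Import ListNotations.

Inductive frm : Type :=
| Atom : nat -> frm
| Bot : frm
| And : frm -> frm -> frm
| Or : frm -> frm -> frm
| Imp : frm -> frm -> frm.   (* strict implication -> *)

(* Frm2: smallest set containing Frm1 = Frm ∪ {A ⊃ B : A,B ∈ Frm} and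
   closed under ∧, ∨.  Since Frm ⊆ Frm2 with the SAME ∧, ∨, we represent
   Frm2 so that each element has a unique representation: atoms, ⊥,
   strict implications A → B (A,B ∈ Frm), material implications A ⊃ B,
   and ∧, ∨ over Frm2.  [F] is the inclusion Frm ⊆ Frm2. *)
Inductive frm2 : Type :=
| Atom2 : nat -> frm2
| Bot2 : frm2
| SImp2 : frm -> frm -> frm2
| MImp : frm -> frm -> frm2
| And2 : frm2 -> frm2 -> frm2
| Or2 : frm2 -> frm2 -> frm2.

Fixpoint F (A : frm) : frm2 :=
  match A with
  | Atom p => Atom2 p
  | Bot => Bot2
  | And A B => And2 (F A) (F B)
  | Or A B => Or2 (F A) (F B)
  | Imp A B => SImp2 A B
  end.

(* Sequents Γ ⇒ Δ with Γ, Δ finite multisets, represented as lists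
   identified up to permutation (rule [g_perm]). *)
Inductive GWFN2 : list frm2 -> list frm2 -> Prop :=
| g_perm : forall G G' D D', Permutation G G' -> Permutation D D' ->
    GWFN2 G D -> GWFN2 G' D'
| g_id : forall p G D, GWFN2 (F (Atom p) :: G) (F (Atom p) :: D)
| g_Lbot : forall G D, GWFN2 (F Bot :: G) D
| g_Land : forall X Y G D, GWFN2 (X :: Y :: G) D -> GWFN2 (And2 X Y :: G) D
| g_Rand : forall X Y G D, GWFN2 G (X :: D) -> GWFN2 G (Y :: D) ->
    GWFN2 G (And2 X Y :: D)
| g_Lor : forall X Y G D, GWFN2 (X :: G) D -> GWFN2 (Y :: G) D ->
    GWFN2 (Or2 X Y :: G) D
| g_Ror : forall X Y G D, GWFN2 G (X :: Y :: D) -> GWFN2 G (Or2 X Y :: D)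
| g_Lmimp : forall A B G D, GWFN2 G (F A :: D) -> GWFN2 (F B :: G) D ->
    GWFN2 (MImp A B :: G) D
| g_Rmimp : forall A B G D, GWFN2 (F A :: G) (F B :: D) ->
    GWFN2 G (MImp A B :: D)
| g_LRimp : forall A B C D' G D, GWFN2 [MImp C D'; F A] [F B] ->
    GWFN2 (F (Imp C D') :: G) (F (Imp A B) :: D)
| g_Rimp : forall A B G D, GWFN2 [F A] [F B] -> GWFN2 G (F (Imp A B) :: D).


Inductive WFN2 : frm -> Prop :=
| ax_or1 : forall A B, WFN2 (Imp A (Or A B))
| ax_or2 : forall A B, WFN2 (Imp B (Or A B))
| ax_and1 : forall A B, WFN2 (Imp (And A B) A)
| ax_and2 : forall A B, WFN2 (Imp (And A B) B)
| ax_dist : forall A B C, WFN2 (Imp (And A (Or B C)) (Or (And A B) (And A C)))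
| ax_id : forall A, WFN2 (Imp A A)
| ax_bot : forall A, WFN2 (Imp Bot A)
| r_mp : forall A B, WFN2 A -> WFN2 (Imp A B) -> WFN2 B
| r_k : forall A B, WFN2 A -> WFN2 (Imp B A)
| r_trans : forall A B C, WFN2 (Imp A B) -> WFN2 (Imp B C) -> WFN2 (Imp A C)
| r_conj : forall A B C, WFN2 (Imp A B) -> WFN2 (Imp A C) -> WFN2 (Imp A (And B C))
| r_disj : forall A B C, WFN2 (Imp A C) -> WFN2 (Imp B C) -> WFN2 (Imp (Or A B) C)
| r_and : forall A B, WFN2 A -> WFN2 B -> WFN2 (And A B)
| r_N2 : forall A B C D, WFN2 (Imp C (Or A D)) -> WFN2 (Imp (And C B) D) ->
    WFN2 (Imp (Imp A B) (Imp C D)).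

Definition Top : frm := Imp Bot Bot.

Fixpoint bigAnd (l : list frm) : frm :=
  match l with
  | [] => Top
  | [A] => A
  | A :: l' => And A (bigAnd l')
  end.

Fixpoint bigOr (l : list frm) : frm :=
  match l with
  | [] => Bot
  | [A] => A
  | A :: l' => Or A (bigOr l')
  end.

(* Main.v *)
Require Import Defs.
From Stdlib Require Import List Permutation.
Import ListNotations.

Definition Ent (N P : list frm) : Prop :=
  forall C D, (forall a, In a N -> WFN2 (Imp C a)) ->
              (forall b, In b P -> WFN2 (Imp b D)) -> WFN2 (Imp C D).

Lemma dist_helper X Y Z W :
  WFN2 (Imp X (Or Y Z)) -> WFN2 (Imp (And X Y) W) -> WFN2 (Imp (And X Z) W) ->
  WFN2 (Imp X W).
Proof.
  intros h1 h2 h3.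
  eapply r_trans. apply r_conj. apply ax_id. exact h1.
  eapply r_trans. apply ax_dist. apply r_disj; assumption.
Qed.

Lemma ent_ax a N P : In a N -> In a P -> Ent N P.
Proof. intros h1 h2 C D hC hD. eapply r_trans; eauto. Qed.

Lemma ent_andL A B N P : In (And A B) N -> Ent (A::B::N) P -> Ent N P.
Proof.
  intros hin h C D hC hD. apply h; auto.
  intros a [<-|[<-|ha]]; auto.
  - eapply r_trans. apply hC, hin. apply ax_and1.
  - eapply r_trans. apply hC, hin. apply ax_and2.
Qed.

Lemma ent_orR A B N P : In (Or A B) P -> Ent N (A::B::P) -> Ent N P.
Proof.
  intros hin h C D hC hD. apply h; auto.
  intros b [<-|[<-|hb]]; auto.
  - eapply r_trans. apply ax_or1. apply hD, hin.
  - eapply r_trans. apply ax_or2. apply hD, hin.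
Qed.

Lemma ent_orL A B N P : In (Or A B) N -> Ent (A::N) P -> Ent (B::N) P -> Ent N P.
Proof.
  intros hin h1 h2 C D hC hD.
  apply (dist_helper C A B D).
  - apply hC, hin.
  - apply h1; auto. intros a [<-|ha]. apply ax_and2.
    eapply r_trans. apply ax_and1. auto.
  - apply h2; auto. intros a [<-|ha]. apply ax_and2.
    eapply r_trans. apply ax_and1. auto.
Qed.

Lemma ent_andR A B N P : In (And A B) P -> Ent N (A::P) -> Ent N (B::P) -> Ent N P.
Proof.
  intros hin h1 h2 C D hC hD.
  apply (dist_helper C A D D).
  - apply h1; auto. intros b [<-|hb]. apply ax_or1.
    eapply r_trans. apply hD, hb. apply ax_or2.
  - apply (dist_helper (And C A) B D D).
    + apply h2. intros a ha. eapply r_trans. apply ax_and1. auto.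
      intros b [<-|hb]. apply ax_or1.
      eapply r_trans. apply hD, hb. apply ax_or2.
    + eapply r_trans. apply r_conj.
      * eapply r_trans. apply ax_and1. apply ax_and2.
      * apply ax_and2.
      * apply hD, hin.
    + apply ax_and2.
  - apply ax_and2.
Qed.

Definition gf := (frm + (frm * frm))%type.

Definition F' (g : gf) : frm2 :=
  match g with inl A => F A | inr (A, B) => MImp A B end.

Definition coverL (N P : list frm) (g : gf) : Prop :=
  match g with inl A => In A N | inr (A, B) => In A P \/ In B N end.
Definition coverR (N P : list frm) (g : gf) : Prop :=
  match g with inl A => In A P | inr (A, B) => In A N /\ In B P end.

Definition Val (GG DD : list gf) : Prop :=
  forall N P, (forall g, In g GG -> coverL N P g) ->
              (forall d, In d DD -> coverR N P d) -> Ent N P.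

Lemma coverL_mono N P N' P' g : incl N N' -> incl P P' -> coverL N P g -> coverL N' P' g.
Proof. destruct g as [A|[A B]]; simpl; firstorder. Qed.
Lemma coverR_mono N P N' P' g : incl N N' -> incl P P' -> coverR N P g -> coverR N' P' g.
Proof. destruct g as [A|[A B]]; simpl; firstorder. Qed.

Lemma F_inj A B : F A = F B -> A = B.
Proof.
  revert B; induction A; destruct B; simpl; intro h; try discriminate;
  try reflexivity; injection h; intros; subst; try reflexivity; f_equal; auto.
Qed.

Lemma F'_F g A : F' g = F A -> g = inl A.
Proof.
  destruct g as [B|[B1 B2]]; simpl; intro h.
  - f_equal; apply F_inj; auto.
  - destruct A; discriminate.
Qed.

Lemma F'_and g X Y : F' g = And2 X Y -> exists A B, g = inl (And A B) /\ X = F A /\ Y = F B.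
Proof.
  destruct g as [B|[B1 B2]]; simpl; intro h; [|discriminate].
  destruct B; try discriminate. injection h; intros; subst; eauto.
Qed.

Lemma F'_or g X Y : F' g = Or2 X Y -> exists A B, g = inl (Or A B) /\ X = F A /\ Y = F B.
Proof.
  destruct g as [B|[B1 B2]]; simpl; intro h; [|discriminate].
  destruct B; try discriminate. injection h; intros; subst; eauto.
Qed.

Lemma F'_mimp g A B : F' g = MImp A B -> g = inr (A, B).
Proof.
  destruct g as [C|[B1 B2]]; simpl; intro h.
  - destruct C; discriminate.
  - injection h; intros; subst; auto.
Qed.

Lemma map_cons_inv (l : list gf) x G : x :: G = map F' l ->
  exists g l', l = g :: l' /\ F' g = x /\ G = map F' l'.
Proof. destruct l; simpl; intro h; [discriminate|]. injection h; intros; subst; eauto. Qed.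

Ltac incl_tac := intros ? ?; simpl in *; tauto.

Lemma soundness G D : GWFN2 G D -> forall GG DD, G = map F' GG -> D = map F' DD -> Val GG DD.
Proof.
  induction 1; intros GG DD eG eD.
  -
    subst.
    destruct (Permutation_map_inv _ _ H) as [GG0 [e1 p1]].
    destruct (Permutation_map_inv _ _ H0) as [DD0 [e2 p2]].
    intros N P hL hR. apply (IHGWFN2 GG0 DD0 e1 e2).
    + intros g hg. apply hL. eapply Permutation_in; [apply Permutation_sym|]; eauto.
    + intros d hd. apply hR. eapply Permutation_in; [apply Permutation_sym|]; eauto.
  - destruct (map_cons_inv _ _ _ eG) as [g [l [-> [h1 _]]]].
    destruct (map_cons_inv _ _ _ eD) as [d [l' [-> [h2 _]]]].
    apply F'_F in h1; apply F'_F in h2; subst.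
    intros N P hL hR. apply (ent_ax (Atom p)).
    apply (hL (inl (Atom p))); simpl; auto.
    apply (hR (inl (Atom p))); simpl; auto.
  - destruct (map_cons_inv _ _ _ eG) as [g [l [-> [h1 _]]]].
    apply F'_F in h1; subst.
    intros N P hL hR C D' hC hD. eapply r_trans. apply hC.
    apply (hL (inl Bot)); simpl; auto. apply ax_bot.
  - destruct (map_cons_inv _ _ _ eG) as [g [l [-> [h1 h2]]]].
    destruct (F'_and _ _ _ h1) as [A [B [-> [-> ->]]]].
    intros N P hL hR.
    apply (ent_andL A B). apply (hL (inl (And A B))); simpl; auto.
    apply (IHGWFN2 (inl A :: inl B :: l) DD); subst; auto.
    + intros g [<-|[<-|hg]]; simpl; auto.
      eapply coverL_mono; [| |apply hL; simpl; auto]; incl_tac.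
    + intros d hd. eapply coverR_mono; [| |apply hR; auto]; incl_tac.
  - destruct (map_cons_inv _ _ _ eD) as [g [l [-> [h1 h2]]]].
    destruct (F'_and _ _ _ h1) as [A [B [-> [-> ->]]]].
    intros N P hL hR.
    apply (ent_andR A B). apply (hR (inl (And A B))); simpl; auto.
    + apply (IHGWFN2_1 GG (inl A :: l)); subst; auto.
      * intros g hg. eapply coverL_mono; [| |apply hL; auto]; incl_tac.
      * intros d [<-|hd]; simpl; auto.
        eapply coverR_mono; [| |apply hR; simpl; auto]; incl_tac.
    + apply (IHGWFN2_2 GG (inl B :: l)); subst; auto.
      * intros g hg. eapply coverL_mono; [| |apply hL; auto]; incl_tac.
      * intros d [<-|hd]; simpl; auto.
        eapply coverR_mono; [| |apply hR; simpl; auto]; incl_tac.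
  - destruct (map_cons_inv _ _ _ eG) as [g [l [-> [h1 h2]]]].
    destruct (F'_or _ _ _ h1) as [A [B [-> [-> ->]]]].
    intros N P hL hR.
    apply (ent_orL A B). apply (hL (inl (Or A B))); simpl; auto.
    + apply (IHGWFN2_1 (inl A :: l) DD); subst; auto.
      * intros g [<-|hg]; simpl; auto.
        eapply coverL_mono; [| |apply hL; simpl; auto]; incl_tac.
      * intros d hd. eapply coverR_mono; [| |apply hR; auto]; incl_tac.
    + apply (IHGWFN2_2 (inl B :: l) DD); subst; auto.
      * intros g [<-|hg]; simpl; auto.
        eapply coverL_mono; [| |apply hL; simpl; auto]; incl_tac.
      * intros d hd. eapply coverR_mono; [| |apply hR; auto]; incl_tac.
  - destruct (map_cons_inv _ _ _ eD) as [g [l [-> [h1 h2]]]].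
    destruct (F'_or _ _ _ h1) as [A [B [-> [-> ->]]]].
    intros N P hL hR.
    apply (ent_orR A B). apply (hR (inl (Or A B))); simpl; auto.
    apply (IHGWFN2 GG (inl A :: inl B :: l)); subst; auto.
    + intros g hg. eapply coverL_mono; [| |apply hL; auto]; incl_tac.
    + intros d [<-|[<-|hd]]; simpl; auto.
      eapply coverR_mono; [| |apply hR; simpl; auto]; incl_tac.
  - destruct (map_cons_inv _ _ _ eG) as [g [l [-> [h1 h2]]]].
    apply F'_mimp in h1; subst.
    intros N P hL hR.
    destruct (hL (inr (A, B)) (or_introl eq_refl)) as [hA|hB].
    + apply (IHGWFN2_1 l (inl A :: DD)); auto.
      * intros g hg; apply hL; simpl; auto.
      * intros d [<-|hd]; simpl; auto.
    + apply (IHGWFN2_2 (inl B :: l) DD); auto.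
      * intros g [<-|hg]; simpl; auto. apply hL; simpl; auto.
  - destruct (map_cons_inv _ _ _ eD) as [g [l [-> [h1 h2]]]].
    apply F'_mimp in h1; subst.
    intros N P hL hR.
    destruct (hR (inr (A, B)) (or_introl eq_refl)) as [hA hB].
    apply (IHGWFN2 (inl A :: GG) (inl B :: l)); auto.
    + intros g [<-|hg]; simpl; auto.
    + intros d [<-|hd]; simpl; auto. apply hR; simpl; auto.
  - destruct (map_cons_inv _ _ _ eG) as [g [l [-> [h1 _]]]].
    destruct (map_cons_inv _ _ _ eD) as [d [l' [-> [h2 _]]]].
    apply F'_F in h1; apply F'_F in h2; subst.
    assert (V : Val [inr (C, D'); inl A] [inl B]) by (apply IHGWFN2; reflexivity).
    assert (h1 : WFN2 (Imp A (Or C B))).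
    { apply (V [A] [C; B]).
      - intros g [<-|[<-|[]]]; simpl; auto.
      - intros d [<-|[]]; simpl; auto.
      - intros a [<-|[]]. apply ax_id.
      - intros b [<-|[<-|[]]]. apply ax_or1. apply ax_or2. }
    assert (h2 : WFN2 (Imp (And A D') B)).
    { apply (V [D'; A] [B]).
      - intros g [<-|[<-|[]]]; simpl; auto.
      - intros d [<-|[]]; simpl; auto.
      - intros a [<-|[<-|[]]]. apply ax_and2. apply ax_and1.
      - intros b [<-|[]]. apply ax_id. }
    pose proof (r_N2 C D' A B h1 h2) as hN.
    intros N P hL hR Cc Dd hC hD.
    eapply r_trans. apply hC, (hL (inl (Imp C D'))); simpl; auto.
    eapply r_trans. exact hN. apply hD, (hR (inl (Imp A B))); simpl; auto.
  - destruct (map_cons_inv _ _ _ eD) as [d [l' [-> [h2 _]]]].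
    apply F'_F in h2; subst.
    assert (V : Val [inl A] [inl B]) by (apply IHGWFN2; reflexivity).
    assert (h : WFN2 (Imp A B)).
    { apply (V [A] [B]).
      - intros g [<-|[]]; simpl; auto.
      - intros d [<-|[]]; simpl; auto.
      - intros a [<-|[]]. apply ax_id.
      - intros b [<-|[]]. apply ax_id. }
    intros N P hL hR Cc Dd hC hD.
    eapply r_trans. apply r_k. exact h.
    apply hD, (hR (inl (Imp A B))); simpl; auto.
Qed.

Lemma bigAnd_proj l a : In a l -> WFN2 (Imp (bigAnd l) a).
Proof.
  induction l as [|x l IH]; [intros []|].
  intros [<-|h].
  - destruct l; simpl. apply ax_id. apply ax_and1.
  - destruct l as [|y l]; [destruct h|].
    change (bigAnd (x :: y :: l)) with (And x (bigAnd (y :: l))).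
    eapply r_trans. apply ax_and2. auto.
Qed.

Lemma bigOr_inj l b : In b l -> WFN2 (Imp b (bigOr l)).
Proof.
  induction l as [|x l IH]; [intros []|].
  intros [<-|h].
  - destruct l; simpl. apply ax_id. apply ax_or1.
  - destruct l as [|y l]; [destruct h|].
    change (bigOr (x :: y :: l)) with (Or x (bigOr (y :: l))).
    eapply r_trans. apply IH, h. apply ax_or2.
Qed.

Theorem theorem3p10 (Gamma Delta : list frm) :
  NoDup Gamma -> NoDup Delta ->
  GWFN2 (map F Gamma) (map F Delta) ->
  WFN2 (Imp (bigAnd Gamma) (bigOr Delta)).
Proof.
  intros _ _ H.
  assert (V : Val (map inl Gamma) (map inl Delta)).
  { apply (soundness _ _ H); rewrite map_map; reflexivity. }
  apply (V Gamma Delta).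
  - intros g hg. apply in_map_iff in hg. destruct hg as [x [<- hx]]. exact hx.
  - intros d hd. apply in_map_iff in hd. destruct hd as [x [<- hx]]. exact hx.
  - apply bigAnd_proj.
  - apply bigOr_inj.
Qed.
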